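(* Consider the control system, with state $(J_1,J_3,K_2,Q_2,J_0,Q_1,K_1,Q_3,K_3,J_2)\in\mathbb{R}^{10}$ and scalar control $g(t)$, \[ \begin{aligned} \dot J_1&=2gJ_3,\quad \dot J_3=-2gJ_1+2gK_2,\quad \dot K_2=2gJ_3+2Q_2,\quad \dot Q_2=-2K_2,\\ \dot J_0&=-2gQ_1,\quad \dot Q_1=-2gJ_0-2K_1+2gQ_3,\quad \dot K_1=2Q_1+2gK_3,\\ \dot Q_3&=-2gQ_1-2K_3,\quad \dot K_3=-2gK_1+2Q_3-2gJ_2,\quad \dot J_2=-2gK_3, \end{aligned} \] with initial state $(J_1,J_3,K_2,Q_2)=(-1,0,0,0)$, $(J_0,Q_1,K_1,Q_3,K_3,J_2)=(1,0,0,0,0,0)$ and target state $(J_1,J_3,K_2,Q_2)=(1,0,0,0)$, $(J_0,Q_1,K_1,Q_3,K_3,J_2)=(1,0,0,0,0,0)$. Let $m\in\{3,5,7,\ldots\}$ be an odd integer and let the control bound $G_0$ satisfy \[ \frac{m}{m^2+1}\le G_0<\frac{m-2}{(m-2)^2+1}. \] Then the minimum time $T>0$ at which the target state can be reached from the initial state using a constant control $g(t)\equiv G$ with $0<G\le G_0$ is \[ T=\frac{\pi}{2}\sqrt{m^2+1}, \] attained with the constant control $G=m/(m^2+1)$.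
   Context: Here $g(t)$ is the photon–phonon coupling rate (in units of the mechanical frequency) of a cavity optomechanical system, and the target corresponds to swapping photon and phonon populations. *)

(* Defs.v *)
From Stdlib Require Import Reals.
From Coquelicot Require Import Coquelicot.
Open Scope R_scope.

Definition is_solution (G : R)
  (J1 J3 K2 Q2 J0 Q1 K1 Q3 K3 J2 : R -> R) : Prop :=
  forall t : R,
    is_derive J1 t (2 * G * J3 t) /\
    is_derive J3 t (- 2 * G * J1 t + 2 * G * K2 t) /\
    is_derive K2 t (2 * G * J3 t + 2 * Q2 t) /\
    is_derive Q2 t (- 2 * K2 t) /\
    is_derive J0 t (- 2 * G * Q1 t) /\
    is_derive Q1 t (- 2 * G * J0 t - 2 * K1 t + 2 * G * Q3 t) /\
    is_derive K1 t (2 * Q1 t + 2 * G * K3 t) /\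
    is_derive Q3 t (- 2 * G * Q1 t - 2 * K3 t) /\
    is_derive K3 t (- 2 * G * K1 t + 2 * Q3 t - 2 * G * J2 t) /\
    is_derive J2 t (- 2 * G * K3 t).

Definition reaches (G T : R) : Prop :=
  exists J1 J3 K2 Q2 J0 Q1 K1 Q3 K3 J2 : R -> R,
    is_solution G J1 J3 K2 Q2 J0 Q1 K1 Q3 K3 J2 /\
    J1 0 = -1 /\ J3 0 = 0 /\ K2 0 = 0 /\ Q2 0 = 0 /\
    J0 0 = 1 /\ Q1 0 = 0 /\ K1 0 = 0 /\ Q3 0 = 0 /\ K3 0 = 0 /\ J2 0 = 0 /\
    J1 T = 1 /\ J3 T = 0 /\ K2 T = 0 /\ Q2 T = 0 /\
    J0 T = 1 /\ Q1 T = 0 /\ K1 T = 0 /\ Q3 T = 0 /\ K3 T = 0 /\ J2 T = 0.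

(* Main.v *)
Require Import Defs.
From Stdlib Require Import Reals Arith Nsatz Lra Lia ZArith.
From Coquelicot Require Import Coquelicot.
Open Scope R_scope.
Lemma cs_nPI (n : nat) : cos (INR n * PI) = (-1)^n /\ sin (INR n * PI) = 0.
Proof.
  induction n as [|n [IHc IHs]].
  - simpl. rewrite Rmult_0_l, cos_0, sin_0. split; reflexivity.
  - rewrite S_INR, Rmult_plus_distr_r, Rmult_1_l, neg_cos, neg_sin, IHc, IHs.
    simpl. split; ring.
Qed.

Lemma pow_m1_odd (k : nat) : (-1)^(2*k+1) = -1.
Proof. rewrite pow_add, pow_mult. replace ((-1)^2) with 1 by ring. rewrite pow1. ring. Qed.
Lemma pow_m1_even (k : nat) : (-1)^(2*k) = 1.
Proof. rewrite pow_mult. replace ((-1)^2) with 1 by ring. apply pow1. Qed.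

Lemma odd_of_cos (x : R) : 0 < x -> cos x = -1 -> exists k : nat, x = INR (2*k+1) * PI.
Proof.
  intros Hx Hc.
  assert (Hs : sin x = 0).
  { pose proof (sin2_cos2 x) as H. rewrite Hc in H. unfold Rsqr in H.
    apply Rsqr_0_uniq. unfold Rsqr. lra. }
  destruct (sin_eq_0_0 x Hs) as [z Hz].
  assert (Hz0 : (0 < z)%Z).
  { apply lt_0_IZR. pose proof PI_RGT_0. subst x.
    destruct (Rle_or_lt (IZR z) 0) as [H1|H1]; [|exact H1]. nra. }
  assert (Hn : IZR z = INR (Z.to_nat z)).
  { rewrite INR_IZR_INZ, Z2Nat.id by lia. reflexivity. }
  rewrite Hn in Hz. set (n := Z.to_nat z) in *.
  destruct (Nat.Even_or_Odd n) as [[k Hk]|[k Hk]].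
  - exfalso. pose proof (proj1 (cs_nPI n)) as H. rewrite <- Hz, Hc, Hk, pow_m1_even in H. lra.
  - exists k. rewrite <- Hk. exact Hz.
Qed.
Lemma d_mult (f g : R -> R) x df dg : is_derive f x df -> is_derive g x dg ->
  is_derive (fun t => f t * g t) x (df * g x + f x * dg).
Proof. intros H1 H2. apply (is_derive_mult f g x df dg H1 H2). intros; apply Rmult_comm. Qed.
Lemma d_plus (f g : R -> R) x df dg : is_derive f x df -> is_derive g x dg ->
  is_derive (fun t => f t + g t) x (df + dg).
Proof. intros H1 H2. apply (is_derive_plus f g x df dg H1 H2). Qed.
Lemma d_minus (f g : R -> R) x df dg : is_derive f x df -> is_derive g x dg ->
  is_derive (fun t => f t - g t) x (df - dg).
Proof. intros H1 H2. apply (is_derive_minus f g x df dg H1 H2). Qed.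
Lemma d_eq (f : R -> R) x l l' : is_derive f x l -> l = l' -> is_derive f x l'.
Proof. intros H ->; exact H. Qed.

Lemma const_zero (F : R -> R) : (forall t, is_derive F t 0) -> forall T, F T = F 0.
Proof.
  intros H T.
  destruct (MVT_gen F 0 T (fun _ => 0)) as [c [_ Hc]].
  - intros; apply H.
  - intros x _. apply derivable_continuous_pt. exists 0.
    apply is_derive_Reals, H.
  - lra.
Qed.

Lemma exist_sol (a b G iD nA nB iA iB T : R)
 (ha: a*a+b*b=1) (hG: G=a*b) (hD: iD*(b*b-a*a)=1) (hA: nA*nA = 1+2*G) (hB: nB*nB = 1-2*G)
 (hiA: nA*iA=1) (hiB: nB*iB=1)
 (c1: cos(2*a*T) = -1) (s1: sin(2*a*T)=0) (c2: cos(2*b*T)=-1) (s2: sin(2*b*T)=0)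
 (cA: cos(2*nA*T) = 1) (sA: sin(2*nA*T)=0) (cB: cos(2*nB*T) = 1) (sB: sin(2*nB*T)=0) :
 reaches G T.
Proof.
  assert (h2 : 2 * /2 = 1) by field.
  exists (fun t => iD * (- (b*b*b*b) * cos (2*a*t) + a*a*a*a * cos (2*b*t))).
  exists (fun t => iD * (b*b*b * sin (2*a*t) - a*a*a * sin (2*b*t))).
  exists (fun t => iD * G * G * (cos (2*a*t) - cos (2*b*t))).
  exists (fun t => iD * G * (- b * sin (2*a*t) + a * sin (2*b*t))).
  exists (fun t => (((1+G)*(1+G) - G*G*cos(2*nA*t)) * (iA*iA) + ((1-G)*(1-G) - G*G*cos(2*nB*t))*(iB*iB)) / 2).
  exists (fun t => - (G/2) * (sin (2*nA*t) * iA + sin (2*nB*t) * iB)).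
  exists (fun t => (G*(1+G)*(cos(2*nA*t) - 1)*(iA*iA) + G*(1-G)*(cos(2*nB*t)-1)*(iB*iB)) / 2).
  exists (fun t => (G*(1-G)*(cos(2*nB*t)-1)*(iB*iB) - G*(1+G)*(cos(2*nA*t) - 1)*(iA*iA)) / 2).
  exists (fun t => - (G/2) * (sin (2*nA*t) * iA - sin (2*nB*t) * iB)).
  exists (fun t => (((1+G)*(1+G) - G*G*cos(2*nA*t)) * (iA*iA) - ((1-G)*(1-G) - G*G*cos(2*nB*t))*(iB*iB)) / 2).
  split.
  { intro t.
    repeat match goal with |- _ /\ _ => split end; cbv beta; (auto_derive; [easy|]); subst G; unfold Rdiv; nsatz. }
  rewrite !Rmult_0_r, cos_0, sin_0, c1, s1, c2, s2, cA, sA, cB, sB.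
  repeat match goal with |- _ /\ _ => split end; subst G; unfold Rdiv; nsatz.
Qed.
Lemma invariant (a b G : R) (ha : a*a+b*b=1) (hG : G = a*b) (J1 J3 K2 Q2 : R -> R)
  (hs : forall t, is_derive J1 t (2 * G * J3 t) /\
    is_derive J3 t (- 2 * G * J1 t + 2 * G * K2 t) /\
    is_derive K2 t (2 * G * J3 t + 2 * Q2 t) /\
    is_derive Q2 t (- 2 * K2 t)) :
  forall T, (b*b*J1 T + a*a*K2 T) * cos (2*a*T) - (b*J3 T + a*Q2 T) * sin (2*a*T)
   = (b*b*J1 0 + a*a*K2 0) * cos (2*a*0) - (b*J3 0 + a*Q2 0) * sin (2*a*0).
Proof.
  apply (const_zero (fun T => (b*b*J1 T + a*a*K2 T) * cos (2*a*T) - (b*J3 T + a*Q2 T) * sin (2*a*T))).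
  intro t. destruct (hs t) as (h1 & h3 & h2 & h4).
  assert (hc : is_derive (fun t => cos (2*a*t)) t (-(2*a) * sin (2*a*t))) by (auto_derive; [easy|ring]).
  assert (hsn : is_derive (fun t => sin (2*a*t)) t ((2*a) * cos (2*a*t))) by (auto_derive; [easy|ring]).
  eapply d_eq.
  - apply d_minus; apply d_mult; try eassumption;
    apply d_plus; apply is_derive_scal; eassumption.
  - subst G. clear hs h1 h2 h3 h4 hc hsn. nsatz.
Qed.
Lemma bound (k l m : nat) (G : R) : Nat.Odd m -> (3 <= m)%nat ->
  INR (2*k+1) < INR (2*l+1) ->
  G * (INR (2*k+1) * INR (2*k+1) + INR (2*l+1) * INR (2*l+1)) = INR (2*k+1) * INR (2*l+1) ->
  G < (INR m - 2) / ((INR m - 2)^2 + 1) ->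
  INR m * INR m + 1 <= INR (2*k+1) * INR (2*k+1) + INR (2*l+1) * INR (2*l+1).
Proof.
  intros [j Hj] Hm3 HPQ HG HG0.
  set (P := INR (2*k+1)) in *. set (Q := INR (2*l+1)) in *. set (M := INR m) in *.
  assert (HM : 3 <= M) by (unfold M; replace 3 with (INR 3) by (simpl; ring); apply le_INR; exact Hm3).
  assert (HP : 1 <= P) by (unfold P; rewrite plus_INR; pose proof (pos_INR (2*k)); change (INR 1) with 1; lra).
  set (c := M - 2) in *.
  assert (hg : G * (c*c+1) < c).
  { assert (E : c / (c^2+1) * (c*c+1) = c) by (field; nra). nra. }
  assert (h1 : P * Q * (c*c+1) < c * (P*P + Q*Q)).
  { rewrite <- HG. assert (hpq : 0 < P*P+Q*Q) by nra.
    pose proof (Rmult_lt_compat_r _ _ _ hpq hg). lra. }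
  assert (hc1 : 1 <= c) by (unfold c; lra).
  assert (h2 : P - c * Q < 0).
  { assert (0 <= (c-1)*Q) by (apply Rmult_le_pos; lra). nra. }
  assert (h3 : c * P < Q).
  { destruct (Rlt_or_le (c*P) Q) as [H|H]; [exact H|].
    assert (0 <= (c*P - Q) * (c*Q - P)) by (apply Rmult_le_pos; lra). nra. }
  destruct k as [|k].
  - assert (HP1 : P = 1) by (unfold P; simpl; ring).
    assert (Hl : (m < 2*l+1+2)%nat).
    { apply INR_lt. rewrite plus_INR. fold Q. fold M. replace (INR 2) with 2 by (simpl; ring). rewrite HP1 in h3. unfold c in h3. lra. }
    assert (Hml : (m <= 2*l+1)%nat) by lia.
    apply le_INR in Hml. fold Q in Hml. fold M in Hml.
    assert (M*M <= Q*Q) by (apply Rmult_le_compat; lra). rewrite HP1. lra.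
  - assert (HP3 : 3 <= P).
    { unfold P. replace (2 * S k + 1)%nat with (3 + 2*k)%nat by lia. rewrite plus_INR.
      pose proof (pos_INR (2*k)). replace (INR 3) with 3 by (simpl; ring). lra. }
    assert (Q*Q > c*c*(P*P)) by nra.
    unfold c in *. nra.
Qed.

Theorem corollary1 (m : nat) (G0 : R) :
  Nat.Odd m -> (3 <= m)%nat ->
  INR m / (INR m ^ 2 + 1) <= G0 ->
  G0 < (INR m - 2) / ((INR m - 2) ^ 2 + 1) ->
  (* attained with G = m/(m^2+1) at T = (pi/2) sqrt(m^2+1) *)
  (0 < INR m / (INR m ^ 2 + 1) <= G0 /\
   reaches (INR m / (INR m ^ 2 + 1)) (PI / 2 * sqrt (INR m ^ 2 + 1))) /\
  (* and no admissible constant control reaches the target earlier *)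
  (forall (G T : R), 0 < G <= G0 -> 0 < T -> reaches G T ->
     PI / 2 * sqrt (INR m ^ 2 + 1) <= T).
Proof.
  intros Hodd Hm3 HG0a HG0b.
  assert (HM : 3 <= INR m) by (replace 3 with (INR 3) by (simpl; ring); apply le_INR; exact Hm3).
  assert (E2 : INR m ^ 2 = INR m * INR m) by ring.
  pose proof PI_RGT_0 as Hpi.
  split.
  { split.
    { split; [|exact HG0a]. apply Rdiv_lt_0_compat; nra. }
      clear HG0a HG0b.
      set (M := INR m) in *.
      set (s := sqrt (M^2+1)).
      assert (hs : s * s = M*M+1) by (unfold s; rewrite sqrt_sqrt; nra).
      assert (hs0 : 0 < s) by (unfold s; apply sqrt_lt_R0; nra).
      destruct Hodd as [k Hk].
      assert (hw : s * / s = 1) by (field; lra).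
      assert (h1 : (M+1) * / (M+1) = 1) by (field; lra).
      assert (h2 : (M-1) * / (M-1) = 1) by (field; lra).
      assert (h3 : (M*M-1) * / (M*M-1) = 1) by (field; nra).
      assert (Ha : 2 * / s * (PI / 2 * s) = INR 1 * PI) by (simpl; field; lra).
      assert (Hb : 2 * (M / s) * (PI / 2 * s) = INR (2*k+1) * PI) by (rewrite <- Hk; fold M; field; lra).
      assert (HA : 2 * ((M+1) / s) * (PI / 2 * s) = INR (2*(k+1)) * PI).
      { replace (2*(k+1))%nat with (m+1)%nat by lia. rewrite plus_INR. fold M. simpl. field; lra. }
      assert (HB : 2 * ((M-1) / s) * (PI / 2 * s) = INR (2*k) * PI).
      { replace (2*k)%nat with (m-1)%nat by lia. rewrite minus_INR by lia. fold M. simpl. field; lra. }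
      apply (exist_sol (/s) (M/s) (M / (M^2+1)) ((M*M+1) * /(M*M-1)) ((M+1)/s) ((M-1)/s)
               (s * /(M+1)) (s * /(M-1))).
      all: try (rewrite Ha || rewrite Hb || rewrite HA || rewrite HB;
                first [ apply (cs_nPI _) | rewrite (proj1 (cs_nPI _)); first [apply pow_m1_odd | apply pow_m1_even | simpl; ring]]).
      all: clear Ha Hb HA HB; rewrite ?E2; unfold Rdiv.
      all: assert (hw2 : /s * /s = /(M*M+1)) by (rewrite <- Rinv_mult, hs; reflexivity).
      { transitivity ((1 + M*M) * (/s*/s)); [ring|rewrite hw2; field; nra]. }
      { transitivity (M * (/s*/s)); [rewrite hw2; ring|ring]. }
      { transitivity ((M*M+1) * /(M*M-1) * (M*M-1) * (/s*/s)); [ring|rewrite hw2; field; nra]. }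
      { transitivity ((M+1)*(M+1) * (/s*/s)); [ring|rewrite hw2; field; nra]. }
      { transitivity ((M-1)*(M-1) * (/s*/s)); [ring|rewrite hw2; field; nra]. }
      { field; split; lra. }
      { field; split; lra. }
  }
  intros G T [HG HGG0] HT Hr.
  destruct Hr as (J1 & J3 & K2 & Q2 & J0 & Q1 & K1 & Q3 & K3 & J2 & Hsol & i1 & i2 & i3 & i4
    & _ & _ & _ & _ & _ & _ & f1 & f2 & f3 & f4 & _).
  assert (Hh : (INR m - 2) / ((INR m - 2)^2 + 1) <= 1/2).
  { set (c := INR m - 2). assert (Hc0 : 0 < c^2+1) by nra.
    apply (Rmult_le_reg_r (c^2+1)); [lra|].
    replace (c / (c^2+1) * (c^2+1)) with c by (field; apply Rgt_not_eq; exact Hc0). pose proof (pow2_ge_0 (c-1)). nra. }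
  assert (HG2 : G < 1/2) by lra.
  set (p := sqrt (1 + 2*G)). set (q := sqrt (1 - 2*G)).
  assert (hp : p * p = 1 + 2*G) by (unfold p; apply sqrt_sqrt; lra).
  assert (hq : q * q = 1 - 2*G) by (unfold q; apply sqrt_sqrt; lra).
  assert (hq0 : 0 < q) by (unfold q; apply sqrt_lt_R0; lra).
  assert (hpq : q < p) by (unfold p, q; apply sqrt_lt_1; lra).
  set (a := (p - q)/2). set (b := (p + q)/2).
  assert (ha : a*a + b*b = 1).
  { unfold a, b. replace ((p - q) / 2 * ((p - q) / 2) + (p + q) / 2 * ((p + q) / 2))
      with ((p*p + q*q)/2) by field. rewrite hp, hq. field. }
  assert (hG : G = a*b).
  { unfold a, b. replace ((p - q) / 2 * ((p + q) / 2)) with ((p*p - q*q)/4) by field.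
    rewrite hp, hq. field. }
  assert (ha0 : 0 < a) by (unfold a; lra).
  assert (hab : a < b) by (unfold a, b; lra).
  clearbody a b.
  assert (hs4 : forall t, is_derive J1 t (2 * G * J3 t) /\ is_derive J3 t (- 2 * G * J1 t + 2 * G * K2 t) /\ is_derive K2 t (2 * G * J3 t + 2 * Q2 t) /\ is_derive Q2 t (- 2 * K2 t)).
  { intro t. destruct (Hsol t) as (d1 & d2 & d3 & d4 & _).
    split; [exact d1|split; [exact d2|split; [exact d3|exact d4]]]. }
  pose proof (invariant a b G ha hG J1 J3 K2 Q2 hs4 T) as I1.
  assert (ha' : b*b + a*a = 1) by lra.
  assert (hG' : G = b*a) by (rewrite hG; ring).
  pose proof (invariant b a G ha' hG' J1 J3 K2 Q2 hs4 T) as I2.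
  rewrite f1, f2, f3, f4, i1, i2, i3, i4, !Rmult_0_r, cos_0, sin_0 in I1, I2.
  assert (Hc1 : cos (2*a*T) = -1).
  { apply (Rmult_eq_reg_l (b*b)); [|nra]. ring_simplify in I1. lra. }
  assert (Hc2 : cos (2*b*T) = -1).
  { apply (Rmult_eq_reg_l (a*a)); [|nra]. ring_simplify in I2. lra. }
  destruct (odd_of_cos (2*a*T) ltac:(nra) Hc1) as [k hk].
  destruct (odd_of_cos (2*b*T) ltac:(nra) Hc2) as [l hl].
  set (P := INR (2*k+1)) in *. set (Q := INR (2*l+1)) in *.
  assert (HPQ : P < Q).
  { apply (Rmult_lt_reg_r PI); [lra|]. rewrite <- hk, <- hl. nra. }
  assert (E1 : (P*PI)*(P*PI) + (Q*PI)*(Q*PI) = 4*(T*T)).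
  { rewrite <- hk, <- hl. clear - ha. nsatz. }
  assert (E2' : G * ((P*PI)*(P*PI) + (Q*PI)*(Q*PI)) = (P*PI)*(Q*PI)).
  { rewrite <- hk, <- hl. clear - ha hG. subst G. nsatz. }
  assert (Hrel : G * (P*P + Q*Q) = P*Q).
  { apply (Rmult_eq_reg_r (PI*PI)); [|nra]. rewrite <- (Rmult_1_r (P*Q)) at 1.
    replace (G * (P * P + Q * Q) * (PI * PI)) with (G * ((P*PI)*(P*PI) + (Q*PI)*(Q*PI))) by ring.
    rewrite E2'. ring. }
  pose proof (bound k l m G Hodd Hm3 HPQ Hrel ltac:(lra)) as Hb.
  fold P Q in Hb.
  set (s := sqrt (INR m ^ 2 + 1)).
  assert (hs : s * s = INR m * INR m + 1) by (unfold s; rewrite sqrt_sqrt; nra).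
  assert (hs0 : 0 <= s) by (unfold s; apply sqrt_pos).
  destruct (Rle_or_lt (PI/2*s) T) as [H|H]; [exact H|].
  exfalso.
  assert (T*T < (PI/2*s)*(PI/2*s)) by (apply Rmult_le_0_lt_compat; lra).
  assert ((PI/2*s)*(PI/2*s) = PI*PI/4 * (INR m * INR m + 1)) by (rewrite <- hs; field).
  assert (PI*PI/4 * (INR m * INR m + 1) <= PI*PI/4 * (P*P+Q*Q)).
  { apply Rmult_le_compat_l; [nra|lra]. }
  nra.
Qed.
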